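(* Let $\Omega\subset\mathbb{R}^2$ have properties (i) and $( ** )$. Then for every $\omega^\diamond=(p,q)\in\Omega^\diamond$, the line $L(\omega^\diamond)=\{(x,y)\in\mathbb{R}^2:px-qy=1\}$ is not parallel to either of the boundary rays $l_0,l_1$ of the cone $C=\operatorname{cl}(\mathbb{R}_+\Omega)$. This holds also when the rays $l_0$ and $l_1$ coincide (i.e. when $\dim\Omega=1$).
   Context: $\mathbb{R}_+=[0,\infty)$; points of $\mathbb{R}^{2*}$ are $(p,q)$. Property (i): $\Omega$ nonempty, convex, closed, $0\notin\Omega$, $\lambda\Omega\subset\Omega$ for $\lambda>1$. Property $( ** )$: $\partial C=l_0\cup l_1$ where $l_0,l_1$ are the (possibly coinciding) boundary rays from the origin of the closed cone $C=\operatorname{cl}(\mathbb{R}_+\Omega)$, and $\operatorname{dist}(l_0,\Omega)=\operatorname{dist}(l_1,\Omega)=0$. Antipolar: $\Omega^\diamond=\{(p,q):px-qy\ge1\ \forall(x,y)\in\Omega\}$. *)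

(* Defs.v *)
From HB Require Import structures.
From mathcomp Require Import all_boot all_order all_algebra.
From mathcomp Require Import all_classical all_reals all_analysis.
Set Implicit Arguments. Unset Strict Implicit. Unset Printing Implicit Defensive.
Import Order.TTheory GRing.Theory Num.Theory numFieldNormedType.Exports.
Local Open Scope classical_set_scope.
Local Open Scope ring_scope.

Section Defs.
Variable R : realType.

Definition convex2 (Om : set (R * R)) : Prop :=
  forall a b, Om a -> Om b -> forall t : R, 0 <= t -> t <= 1 ->
    Om (t * a.1 + (1 - t) * b.1, t * a.2 + (1 - t) * b.2).

Definition prop_i (Om : set (R * R)) : Prop :=
  Om !=set0 /\ convex2 Om /\ closed Om /\ ~ Om (0, 0) /\
  (forall l : R, 1 < l -> forall w, Om w -> Om (l * w.1, l * w.2)).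

Definition cone_hull (Om : set (R * R)) : set (R * R) :=
  [set z | exists t : R, exists w, 0 <= t /\ Om w /\ z = (t * w.1, t * w.2)].

Definition clcone (Om : set (R * R)) : set (R * R) := closure (cone_hull Om).

Definition boundary (A : set (R * R)) : set (R * R) := closure A `\` interior A.

Definition ray (d : R * R) : set (R * R) :=
  [set z | exists t : R, 0 <= t /\ z = (t * d.1, t * d.2)].

(* Euclidean distance between two subsets of the plane is zero *)
Definition dist0 (A B : set (R * R)) : Prop :=
  forall e : R, 0 < e -> exists a, exists b, A a /\ B b /\
    (a.1 - b.1) ^+ 2 + (a.2 - b.2) ^+ 2 < e ^+ 2.

Definition prop_ss (Om : set (R * R)) (d0 d1 : R * R) : Prop :=
  d0 != (0, 0) /\ d1 != (0, 0) /\
  boundary (clcone Om) = ray d0 `|` ray d1 /\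
  dist0 (ray d0) Om /\ dist0 (ray d1) Om.

Definition antipolar (Om : set (R * R)) : set (R * R) :=
  [set pq | forall w, Om w -> 1 <= pq.1 * w.1 - pq.2 * w.2].

Definition Lline (pq : R * R) : set (R * R) :=
  [set z | pq.1 * z.1 - pq.2 * z.2 = 1].

(* a line in the plane is parallel to the ray in direction d iff it is
   invariant under translation by d *)
Definition parallel_to (L : set (R * R)) (d : R * R) : Prop :=
  forall z, L z -> L (z.1 + d.1, z.2 + d.2).

End Defs.

(* Main.v *)
Require Import Defs.
From HB Require Import structures.
From mathcomp Require Import all_boot all_order all_algebra.
From mathcomp Require Import all_classical all_reals all_analysis.
From mathcomp Require Import ring lra.
Import Order.TTheory GRing.Theory Num.Theory numFieldNormedType.Exports.
Local Open Scope classical_set_scope.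
Local Open Scope ring_scope.

Lemma one_side (R : realType) (Om : set (R * R)) (d : R * R) pq :
  Om !=set0 -> dist0 (ray d) Om -> antipolar Om pq ->
  ~ parallel_to (Lline pq) d.
Proof.
case=> w0 Hw0 Hd Hpq Hpar.
case: pq Hpq Hpar => p q Hpq Hpar.
have f0 := Hpq w0 Hw0; rewrite /= in f0.
set c := p * w0.1 - q * w0.2 in f0.
have c0 : c != 0 by apply/negP => /eqP c0; rewrite c0 in f0; lra.
have Hz : Lline (p, q) (w0.1 / c, w0.2 / c).
  rewrite /Lline /=.
  have -> : p * (w0.1 / c) - q * (w0.2 / c) = c / c by rewrite /c; field.
  by rewrite divff.
have := Hpar _ Hz; rewrite /Lline /= => Hz2.
rewrite /Lline /= in Hz.
have fd : p * d.1 - q * d.2 = 0.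
  have -> : p * d.1 - q * d.2 = (p * (w0.1 / c + d.1) - q * (w0.2 / c + d.2))
     - (p * (w0.1 / c) - q * (w0.2 / c)) by ring.
  by rewrite Hz Hz2 subrr.
set s := p ^+ 2 + q ^+ 2 + 1.
have s1 : 1 <= s by rewrite /s; nra.
have s0 : 0 < s by lra.
have e0 : 0 < s^-1 by rewrite invr_gt0.
have [a [b [[t [t0 ->]] [Hb Hab]]]] := Hd _ e0.
have fb := Hpq b Hb; rewrite /= in fb.
rewrite /= in Hab.
set u := b.1 - t * d.1.
set v := b.2 - t * d.2.
have fbuv : p * u - q * v = p * b.1 - q * b.2.
  have -> : p * u - q * v = (p * b.1 - q * b.2) - t * (p * d.1 - q * d.2)
    by rewrite /u /v; ring.
  by rewrite fd mulr0 subr0.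
have huv : u ^+ 2 + v ^+ 2 < s^-1 ^+ 2.
  have -> : u ^+ 2 + v ^+ 2 = (t * d.1 - b.1) ^+ 2 + (t * d.2 - b.2) ^+ 2
    by rewrite /u /v; ring.
  exact: Hab.
have CS : (p * u - q * v) ^+ 2 <= (p ^+ 2 + q ^+ 2) * (u ^+ 2 + v ^+ 2).
  have : 0 <= (p * v + q * u) ^+ 2 by apply: sqr_ge0.
  have -> : (p ^+ 2 + q ^+ 2) * (u ^+ 2 + v ^+ 2) = (p * u - q * v) ^+ 2 + (p * v + q * u) ^+ 2 by ring.
  lra.
have se : s * s^-1 = 1 by rewrite divff // gt_eqF.
have h1 : (p ^+ 2 + q ^+ 2) * (u ^+ 2 + v ^+ 2) <= s * (u ^+ 2 + v ^+ 2).
  apply: ler_wpM2r; first by nra.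
  rewrite /s; lra.
have h2 : s * (u ^+ 2 + v ^+ 2) < s * s^-1 ^+ 2 by rewrite ltr_pM2l.
have h3 : s * s^-1 ^+ 2 = s^-1 by rewrite expr2 mulrA se mul1r.
have h4 : s^-1 <= 1 by rewrite invf_le1.
have h5 : 1 <= (p * u - q * v) ^+ 2 by rewrite fbuv; nra.
lra.
Qed.

Theorem lemma6 (R : realType) (Om : set (R * R)) (d0 d1 : R * R) :
  prop_i Om -> prop_ss Om d0 d1 ->
  forall pq, antipolar Om pq ->
    ~ parallel_to (Lline pq) d0 /\ ~ parallel_to (Lline pq) d1.
Proof.
move=> [Hne _] [_ [_ [_ [H0 H1]]]] pq Hpq.
by split; [exact: (@one_side _ _ _ _ Hne H0 Hpq) | exact: (@one_side _ _ _ _ Hne H1 Hpq)].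
Qed.
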